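(* Let $n\ge 3$ and for $p>0$ define $$\|M_{S_n}\|_p^{*}:=\sup_{y\ge 1}\left(\frac{y^p+(n-1)\left(\frac{1+y}{2}\right)^p}{y^p+(n-1)}\right)^{1/p}.$$ Then $$\lim_{p\to\infty}\left(\|M_{S_n}\|_p^{*}\right)^p=\frac{1+\sqrt{n}}{2}.$$ *)

(* Defs.v *)
From HB Require Import structures.
From mathcomp Require Import all_boot all_order all_algebra.
From mathcomp Require Import all_classical all_reals all_analysis.
Set Implicit Arguments. Unset Strict Implicit. Unset Printing Implicit Defensive.
Import Order.TTheory GRing.Theory Num.Theory.
Import numFieldNormedType.Exports.
Local Open Scope classical_set_scope.
Local Open Scope ring_scope.

Definition MSn_norm_star (R : realType) (n : nat) (p : R) : R :=
  sup [set ((y `^ p + (n%:R - 1) * ((1 + y) / 2) `^ p) / (y `^ p + (n%:R - 1))) `^ p^-1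
      | y in [set y : R | 1 <= y]].

(* Main.v *)
Require Import Defs.
From HB Require Import structures.
From mathcomp Require Import all_boot all_order all_algebra.
From mathcomp Require Import all_classical all_reals all_analysis.
From mathcomp Require Import ring lra.
Import Order.TTheory GRing.Theory Num.Theory.
Import numFieldNormedType.Exports.
Local Open Scope classical_set_scope.
Local Open Scope ring_scope.
Lemma ln_le_sub1 {R : realType} {z : R} : 0 < z -> ln z <= z - 1.
Proof.
move=> z0; have h := @le_ln1Dx R (z - 1).
have e : 1 + (z - 1) = z by ring.
rewrite e in h; apply: h; lra.
Qed.

Lemma powR_expR {R : realType} (x p : R) : 0 < x -> x `^ p = expR (p * ln x).
Proof. by move=> x0; rewrite /powR gt_eqF. Qed.

Lemma ln2 {R : realType} (z y : R) : 0 < z -> 0 < y -> 2 * ln z - ln y = ln (z * z / y).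
Proof. by move=> z0 y0; rewrite lnM ?lnM ?lnV ?posrE ?invr_gt0 ?mulr_gt0 //; ring. Qed.

Lemma ln1 {R : realType} (z y : R) : 0 < z -> 0 < y -> ln z - ln y = ln (z / y).
Proof. by move=> z0 y0; rewrite lnM ?lnV ?posrE ?invr_gt0 //. Qed.

Lemma quad {R : realType} (m L u : R) : 1 < L -> 4 * L * (L - 1) = m ->
  u * u + m * u <= L * (u * u + m).
Proof.
move=> L1 hL.
have h : 0 <= (2 * (L - 1) * u - m) ^+ 2 by apply: sqr_ge0.
have e : (2 * (L - 1) * u - m) ^+ 2 = 4 * (L - 1) * (L * (u * u + m) - (u * u + m * u)).
  rewrite -hL; ring.
rewrite e in h.
rewrite -subr_ge0.
rewrite pmulr_rge0 in h => //.
lra.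
Qed.

Lemma f_ub {R : realType} (m L K p y : R) : 0 < m -> 1 < L -> 4 * L * (L - 1) = m ->
  0 < K -> m <= (L - 1) * (1 + K / 4) -> K <= p -> 1 <= y ->
  (y `^ p + m * ((1 + y) / 2) `^ p) / (y `^ p + m) <= expR (K ^+ 2 / (8 * p)) * L.
Proof.
move=> m0 L1 hL K0 hK Kp y1.
have p0 : 0 < p by apply: lt_le_trans Kp.
have y0 : 0 < y by lra.
have z0 : 0 < (1 + y) / 2 by lra.
set A := ln y; set B := ln ((1 + y) / 2).
rewrite (@powR_expR R y p y0) (@powR_expR R _ p z0) -/A -/B.
set c := expR (K ^+ 2 / (8 * p)).
have c1 : 1 <= c.
  have h : expR 0 <= c.
    rewrite /c ler_expR; apply: divr_ge0; [exact: sqr_ge0|lra].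
  by rewrite expR0 in h.
rewrite ler_pdivrMr; last by apply: ltr_wpDr; [lra|exact: expR_gt0].
set d := K / p.
have d0 : 0 < d by apply: divr_gt0.
have pd : p * d = K by rewrite /d mulrC divfK // gt_eqF.
have ec : K ^+ 2 / (8 * p) = p * d ^+ 2 / 8.
  rewrite -pd; field; rewrite gt_eqF //.
have [yK|yK] := lerP y (1 + d).
- have h1 : 2 * B - A = ln ((1 + y) / 2 * ((1 + y) / 2) / y).
    exact: ln2.
  have h2 := ln_le_sub1 (divr_gt0 (mulr_gt0 z0 z0) y0).
  have h3 : (1 + y) / 2 * ((1 + y) / 2) / y - 1 = (y - 1) ^+ 2 / (4 * y).
    field; rewrite gt_eqF //.
  have h4 : (y - 1) ^+ 2 / (4 * y) <= d ^+ 2 / 4.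
    rewrite ler_pdivrMr; last lra.
    have : (y - 1) ^+ 2 <= d ^+ 2 by rewrite ler_sqr ?nnegrE; lra.
    have : 0 <= d ^+ 2 by exact: sqr_ge0.
    nra.
  have hB : p * B <= p * d ^+ 2 / 8 + p * A / 2.
    have : 2 * B - A <= d ^+ 2 / 4 by lra.
    nra.
  set u := expR (p * A / 2).
  have u0 : 0 < u by exact: expR_gt0.
  have ea : expR (p * A) = u * u by rewrite /u -expRD; congr expR; field.
  have eb : expR (p * B) <= c * u.
    by rewrite /c /u -expRD ler_expR ec.
  rewrite ea.
  have q := @quad R m L u L1 hL.
  nra.
- have h1 : B - A = ln ((1 + y) / 2 / y).
    exact: ln1.
  have h2 := ln_le_sub1 (divr_gt0 z0 y0).
  have h3 : (1 + y) / 2 / y - 1 = (1 - y) / (2 * y).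
    field; rewrite gt_eqF //.
  have h4 : p * ((1 - y) / (2 * y)) <= - (K / 4).
    rewrite mulrA ler_pdivrMr; last lra.
    have : p * (y - 1) > K by rewrite -pd; nra.
    nra.
  have hB : p * B <= p * A - K / 4.
    have : B - A <= (1 - y) / (2 * y) by lra.
    nra.
  set e := expR (- (K / 4)).
  have e0 : 0 < e by exact: expR_gt0.
  have eb : expR (p * B) <= expR (p * A) * e by rewrite /e -expRD ler_expR.
  have ee : e * (1 + K / 4) <= 1.
    have := expR_ge1Dx (K / 4).
    rewrite /e expRN => h.
    rewrite mulrC ler_pdivrMr ?expR_gt0 // mul1r //.
  have me : m * e <= L - 1 by nra.
  have a0 : 0 < expR (p * A) by exact: expR_gt0.
  set a := expR (p * A) in eb a0 *.
  set b := expR (p * B) in eb *.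
  have s1 : m * b <= m * (a * e) by rewrite ler_pM2l.
  have s2 : a * (m * e) <= a * (L - 1) by rewrite ler_pM2l.
  have s3 : L * (a + m) <= c * (L * (a + m)) by rewrite ler_peMl //; nra.
  nra.
Qed.
Lemma powR_inv_pow {R : realType} (x p : R) : 0 < p -> 0 <= x -> (x `^ p^-1) `^ p = x.
Proof. by move=> p0 x0; rewrite -powRrM mulVf ?gt_eqF // powRr1. Qed.

Lemma sup_pow_le {R : realType} (f : R -> R) (p V : R) : 0 < p -> 0 <= V ->
  (forall y, 1 <= y -> 0 <= f y <= V) ->
  sup [set f y `^ p^-1 | y in [set y : R | 1 <= y]] `^ p <= V.
Proof.
move=> p0 V0 hf; set S := [set _ | _ in _].
have ne : S !=set0.
  by exists (f 1 `^ p^-1); rewrite /S /=; exists 1.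
have ub : ubound S (V `^ p^-1).
  move=> _ /= [y y1 <-]; have /andP[h1 h2] := hf y y1.
  by apply: ge0_ler_powR; rewrite ?nnegrE ?invr_ge0 // ltW.
have hsup : has_sup S by split => //; exists (V `^ p^-1).
have s0 : 0 <= sup S.
  apply: le_trans (sup_upper_bound hsup (x := f 1 `^ p^-1) _); first exact: powR_ge0.
  by rewrite /S /=; exists 1.
have hs : sup S <= V `^ p^-1 := ge_sup ne ub.
rewrite -[leRHS](@powR_inv_pow _ V p p0 V0).
apply: ge0_ler_powR; rewrite ?nnegrE ?powR_ge0 //; exact: ltW.
Qed.

Lemma sup_pow_ge {R : realType} (f : R -> R) (p V y0 W : R) : 0 < p -> 0 <= V ->
  (forall y, 1 <= y -> 0 <= f y <= V) -> 1 <= y0 -> 0 <= W -> W <= f y0 ->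
  W <= sup [set f y `^ p^-1 | y in [set y : R | 1 <= y]] `^ p.
Proof.
move=> p0 V0 hf y01 W0 Wf; set S := [set _ | _ in _].
have ub : ubound S (V `^ p^-1).
  move=> _ /= [y y1 <-]; have /andP[h1 h2] := hf y y1.
  by apply: ge0_ler_powR; rewrite ?nnegrE ?invr_ge0 // ltW.
have hsup : has_sup S by split => //; [exists (f 1 `^ p^-1); rewrite /S /=; exists 1|exists (V `^ p^-1)].
have hy0 := sup_upper_bound hsup (x := f y0 `^ p^-1) (ex_intro2 _ _ y0 y01 erefl).
have /andP[f0 _] := hf y0 y01.
have h : W `^ p^-1 <= sup S.
  apply: le_trans hy0; apply: (ge0_ler_powR _ _ _ Wf); rewrite ?nnegrE ?invr_ge0 //; exact: ltW.
rewrite -{1}(@powR_inv_pow _ W p p0 W0).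
apply: ge0_ler_powR; rewrite ?nnegrE ?powR_ge0 //; [exact: ltW|exact: le_trans (powR_ge0 _ _) h].
Qed.

Theorem lemma3p5 (R : realType) (n : nat) (hn : (3 <= n)%N) :
  (fun p : R => MSn_norm_star n p `^ p) @ +oo --> (1 + Num.sqrt (n%:R : R)) / 2.
Proof.
rewrite /MSn_norm_star.
set s := Num.sqrt (n%:R : R).
set m : R := n%:R - 1.
set L := (1 + s) / 2.
have n3 : (3 : R) <= n%:R by rewrite (ler_nat R 3 n).
have s0 : 0 <= s by exact: sqrtr_ge0.
have ss : s * s = n%:R by rewrite -expr2 sqr_sqrtr // ler0n.
have s1 : 1 < s by nra.
have m0 : 0 < m by rewrite /m; lra.
have L1 : 1 < L by rewrite /L; lra.
have hL : 4 * L * (L - 1) = m by rewrite /L /m -ss; field.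
set F := fun p y : R => (y `^ p + m * ((1 + y) / 2) `^ p) / (y `^ p + m).
have F0 : forall p y, 1 <= y -> 0 <= F p y.
  move=> p y y1; apply: divr_ge0; last by apply: addr_ge0; [exact: powR_ge0|lra].
  by apply: addr_ge0; [exact: powR_ge0|apply: mulr_ge0; [lra|exact: powR_ge0]].
apply/cvgrPdist_le => eps eps0.
set l := ln (1 + eps / L).
have eL : 0 < eps / L by apply: divr_gt0; lra.
have l0 : 0 < l by apply: ln_gt0; lra.
set K := 4 * m / (L - 1).
have K0 : 0 < K by apply: divr_gt0; lra.
have hK : m <= (L - 1) * (1 + K / 4).
  have -> : (L - 1) * (1 + K / 4) = L - 1 + m by rewrite /K; field; rewrite gt_eqF // subr_gt0.
  lra.
exists (Num.max K (K ^+ 2 / (8 * l))); split; first by rewrite num_real.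
move=> p; rewrite gt_max => /andP[Kp Kp2].
have p0 : 0 < p by apply: lt_trans K0 Kp.
have hb : forall y, 1 <= y -> 0 <= F p y <= L + eps.
  move=> y y1; rewrite F0 //=.
  have fu := @f_ub R m L K p y m0 L1 hL K0 hK (ltW Kp) y1.
  have c : expR (K ^+ 2 / (8 * p)) <= 1 + eps / L.
    rewrite -[leRHS]lnK ?posrE; last lra.
    rewrite ler_expR -/l ler_pdivrMr; last lra.
    rewrite ltr_pdivrMr in Kp2; last lra.
    nra.
  have cL : expR (K ^+ 2 / (8 * p)) * L <= L + eps.
    have -> : L + eps = (1 + eps / L) * L by field; rewrite gt_eqF //; lra.
    rewrite ler_pM2r //; lra.
  exact: le_trans fu cL.
have LE0 : 0 <= L + eps by lra.
have up := @sup_pow_le R (F p) p (L + eps) p0 LE0 hb.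
set u := 1 + s.
set w := u `^ p^-1.
have w1 : 1 <= w.
  have u1 : 1 <= u by rewrite /u; lra.
  have := @ler_powR R u u1 0 p^-1.
  by rewrite powRr0; apply; rewrite invr_ge0 ltW.
have wp : w `^ p = u by rewrite powR_inv_pow // /u; lra.
have lo : L <= F p (w * w).
  rewrite /F powRM ?wp; try lra.
  have hb2 : u <= ((1 + w * w) / 2) `^ p.
    rewrite -wp; apply: ge0_ler_powR; rewrite ?nnegrE; try nra.
  rewrite ler_pdivlMr; last nra.
  have uu : u * u = 2 * u + m by rewrite /u /m -ss; ring.
  rewrite uu /L -/u.
  nra.
have low := @sup_pow_ge R (F p) p (L + eps) (w * w) L p0 LE0 hb (_ : 1 <= w * w) (ltW (lt_trans ltr01 L1)) lo.
have low' := low ltac:(nra).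
rewrite ler_norml; apply/andP; split; lra.
Qed.
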